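(* Let $u$ be a nonempty word, let $s$ be a nonempty prefix of $u$, and let $j$ be the length of the longest prefix of $u$ covered by $s$. Then $s$ is a left seed of $u$ if and only if $j\ge \mathrm{per}(u)$. In particular, if $s$ is the shortest left seed of $u$, then $s$ is the shortest cover of the prefix $u[1..j]$.
   Context: Positions in a word $u$ are numbered $1,\dots,|u|$; $u[i..j]=u_i\cdots u_j$. For a nonempty word $x$, $\mathrm{per}(x)$ is the smallest positive integer $p$ with $x_i=x_{i+p}$ for all $1\le i\le|x|-p$. A word $s$ covers a word $w$ (is a cover of $w$) if every position of $w$ lies inside some occurrence of $s$ as a factor of $w$. A word $s$ is a seed of $u$ if $s$ is a factor of $u$ and $u$ is a factor of some word covered by $s$; $s$ is a left seed of $u$ if $s$ is both a prefix of $u$ and a seed of $u$. *)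

(* Defs.v *)
From mathcomp Require Import all_boot.
Set Implicit Arguments. Unset Strict Implicit. Unset Printing Implicit Defensive.

(* Words are finite sequences over an alphabet A : eqType.
   Positions are 0-based internally: position i (0-based) = position i+1 in the paper. *)

Section Words.
Variable A : eqType.
Implicit Types u w s x : seq A.

Definition is_period x p : bool := (0 < p) && (take (size x - p) x == drop p x).

Lemma is_period_exists x : exists p, is_period x p.
Proof.
exists (size x).+1; rewrite /is_period /=.
by rewrite (_ : size x - (size x).+1 = 0) ?take0 ?drop_oversize // ?leqnSn //; apply/eqP; rewrite subn_eq0.
Qed.

Definition per x : nat := ex_minn (@is_period_exists x).

Definition occurs_at s w i : Prop := i + size s <= size w /\ take (size s) (drop i w) = s.

Definition covers s w : Prop :=
  forall k, k < size w -> exists i, occurs_at s w i /\ i <= k < i + size s.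

Definition factor s u : Prop := exists i, occurs_at s u i.

Definition seed s u : Prop := factor s u /\ exists w, covers s w /\ factor u w.

Definition left_seed s u : Prop := prefix s u /\ seed s u.

Definition shortest_left_seed s u : Prop :=
  left_seed s u /\ forall t, left_seed t u -> size s <= size t.

Definition shortest_cover s w : Prop :=
  covers s w /\ forall t, covers t w -> size s <= size t.

Definition longest_covered_prefix_len s u j : Prop :=
  j <= size u /\ covers s (take j u) /\
  forall k, k <= size u -> covers s (take k u) -> k <= j.

End Words.

(* Main.v *)
Require Import Defs.
From mathcomp Require Import all_boot.
From mathcomp Require Import zify.
Set Implicit Arguments. Unset Strict Implicit.

Section H.
Variable A : eqType.
Variable x0 : A.

Lemma occursP (s w : seq A) i : occurs_at s w i <->
  (i + size s <= size w /\ forall t, t < size s -> nth x0 w (i+t) = nth x0 s t).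
Proof.
rewrite /occurs_at; split=> [[H1 H2]|[H1 H2]]; split=> //.
- move=> t Ht; rewrite -[in RHS]H2 nth_take // nth_drop //.
- apply: (@eq_from_nth _ x0).
  + rewrite size_takel // size_drop; (timeout 5 lia).
  + move=> t; rewrite size_takel ?size_drop; last (timeout 5 lia).
    move=> Ht; rewrite nth_take // nth_drop; exact: H2.
Qed.

Lemma periodP (x : seq A) p : is_period x p <->
  (0 < p /\ forall t, t + p < size x -> nth x0 x t = nth x0 x (t + p)).
Proof.
rewrite /is_period; split.
- case/andP=> H1 /eqP H2; split=> // t Ht.
  have Ht' : t < size x - p by (timeout 5 lia).
  by rewrite -(nth_take x0 Ht') H2 nth_drop addnC.
- case=> H1 H2; apply/andP; split=> //; apply/eqP.
  apply: (@eq_from_nth _ x0).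
  + rewrite size_takel ?size_drop //; (timeout 5 lia).
  + move=> t; rewrite size_takel; last (timeout 5 lia).
    move=> Ht; rewrite nth_take // nth_drop addnC; apply: H2; (timeout 5 lia).
Qed.

Lemma period_mul (x : seq A) p : is_period x p -> forall q r, r + q*p < size x ->
  nth x0 x r = nth x0 x (r + q*p).
Proof.
move/periodP=> [Hp H]; elim=> [|q IH] r Hr; first by rewrite mul0n addn0.
rewrite mulSnr in Hr *.
rewrite IH; last (timeout 5 lia).
rewrite H; last (timeout 5 lia).
by rewrite addnA.
Qed.

Lemma per_period (x : seq A) : is_period x (per x).
Proof. by rewrite /per; case: ex_minnP. Qed.

Lemma per_min (x : seq A) p : is_period x p -> per x <= p.
Proof. by rewrite /per; case: ex_minnP => m _ H /H. Qed.

Lemma per_size (x : seq A) : 0 < size x -> per x <= size x.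
Proof.
move=> H; apply: per_min; apply/periodP; split=> // t; (timeout 5 lia).
Qed.

Lemma backward (u s : seq A) k : prefix s u -> k <= size u -> per u <= k ->
  covers s (take k u) -> left_seed s u.
Proof.
move=> Hpre Hk Hpk Hcov.
set p := per u.
have Hp := per_period u; rewrite -/p in Hp.
have Hp0 : 0 < p by case/periodP: Hp.
have Hs : take (size s) u = s by apply/eqP; rewrite -prefixE.
have Hsz := size_prefix Hpre.
split=> //; split.
  exists 0; apply/occursP; split=> // t Ht; by rewrite -[in RHS]Hs nth_take.
have Hu : forall t, t < size u -> nth x0 u t = nth x0 u (t %% p).
  move=> t Ht; have E := divn_eq t p; rewrite [in LHS]E addnC; symmetry; apply: (@period_mul u p Hp).
  by rewrite addnC -E.
set z := mkseq (fun i => nth x0 u (i %% p)) (size u * p + k).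
have Hsz' : size z = size u * p + k by rewrite size_mkseq.
have Hz : forall i, i < size z -> nth x0 z i = nth x0 u (i %% p).
  by move=> i; rewrite Hsz' => Hi; rewrite nth_mkseq.
exists z; split.
- move=> i Hi.
  set m := minn (i %/ p) (size u).
  have Hmu : m <= size u by rewrite geq_minr.
  have Hmp : m * p <= size u * p by rewrite leq_mul2r Hmu orbT.
  have Hmi : m * p <= i.
    apply: leq_trans (leq_divM i p); rewrite leq_mul2r geq_minl orbT //.
  have Hr : i - m * p < k.
    case: (leqP (i %/ p) (size u)) => Hc.
    + rewrite /m (minn_idPl Hc).
      have := divn_eq i p; have := ltn_pmod i Hp0; (timeout 5 lia).
    + rewrite /m (minn_idPr (ltnW Hc)); (timeout 5 lia).
  have Hk' : i - m * p < size (take k u) by rewrite size_takel.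
  case: (Hcov _ Hk') => i' [/occursP [Ho1 Ho2] Hb].
  rewrite size_takel // in Ho1.
  exists (m * p + i'); split; last (timeout 5 lia).
  apply/occursP; split; first (timeout 5 lia).
  move=> t Ht.
  rewrite Hz; last (timeout 5 lia).
  rewrite -addnA modnMDl -Hu; last (timeout 5 lia).
  rewrite -Ho2 // nth_take //; (timeout 5 lia).
- exists 0; apply/occursP; split.
    by rewrite Hsz' add0n; apply: leq_trans (leq_addr _ _); apply: leq_pmulr.
  move=> t Ht; rewrite add0n Hz; first by rewrite -Hu.
  rewrite Hsz'; apply: leq_trans (leq_addr k _); apply: leq_trans (leq_pmulr _ Hp0); done.
Qed.
Lemma size_s_le_j (u s : seq A) j : prefix s u ->
  longest_covered_prefix_len s u j -> size s <= j.
Proof.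
move=> Hpre [Hj [Hcj Hmax]].
have Hs : take (size s) u = s by apply/eqP; rewrite -prefixE.
have Hsz := size_prefix Hpre.
apply: Hmax => //; rewrite Hs => q Hq; exists 0; split; last by [].
by apply/occursP; split.
Qed.

Lemma forward (u s : seq A) j : prefix s u -> 0 < size u ->
  longest_covered_prefix_len s u j -> left_seed s u -> per u <= j.
Proof.
move=> Hpre Hu0 HJ [_ [_ [w [Hcw [a Ha]]]]].
have Hsj := size_s_le_j Hpre HJ.
case: HJ => [Hj [Hcj Hmax]].
have Hs : take (size s) u = s by apply/eqP; rewrite -prefixE.
have Hsz := size_prefix Hpre.
case: (leqP (size u) j) => Hju.
  exact: leq_trans (per_size Hu0) Hju.
case/occursP: Ha => Ha1 Ha2.
have Haj : a + j < size w by lia.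
case: (Hcw _ Haj) => b [/occursP [Hb1 Hb2] Hbb].
case: (ltnP b a) => Hab; first lia.
move Hc : (b - a) => c.
case: (leqP (c + size s) (size u)) => Hcu.
- have: c + size s <= j.
    apply: Hmax => // q; rewrite size_takel // => Hq.
    case: (ltnP q j) => Hqj.
    + have Hq' : q < size (take j u) by rewrite size_takel; lia.
      case: (Hcj _ Hq') => i [/occursP [Hi1 Hi2] Hib].
      rewrite size_takel in Hi1; last lia.
      exists i; split=> //; apply/occursP; split; first by rewrite size_takel; lia.
      move=> t Ht; rewrite nth_take; last lia.
      rewrite -Hi2 // nth_take //; lia.
    + exists c; split; last lia.
      apply/occursP; split; first by rewrite size_takel.
      move=> t Ht; rewrite nth_take; last lia.
      rewrite -Hb2 // -Ha2; last lia.
      congr nth; lia.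
  lia.
- apply: leq_trans (_ : c <= j); last lia.
  apply: per_min; apply/periodP; split; first lia.
  move=> t Ht.
  have Hts : t < size s by lia.
  rewrite -(nth_take x0 Hts u) Hs -Hb2 // -Ha2; last lia.
  congr nth; lia.
Qed.

End H.

Theorem lemma1 (A : eqType) (u s : seq A) (j : nat) :
  u != [::] -> s != [::] -> prefix s u ->
  longest_covered_prefix_len s u j ->
  (left_seed s u <-> per u <= j) /\
  (shortest_left_seed s u -> shortest_cover s (take j u)).
Proof.
move=> Hu Hs Hpre HJ.
have [x0 _] : exists x0 : A, true by case: u Hu {Hpre HJ} => [|x ?]; [done | by exists x].
have Hu0 : 0 < size u by case: u Hu {Hpre HJ}.
have Hsj := size_s_le_j x0 Hpre HJ.
have Hfw : left_seed s u -> per u <= j := forward x0 Hpre Hu0 HJ.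
case: HJ => [Hj [Hcj Hmax]].
have Hiff : left_seed s u <-> per u <= j.
  split=> // H; exact: (backward x0 Hpre Hj H Hcj).
split=> //.
move=> [Hls Hmin]; split=> // t Ht.
apply: Hmin.
have Hj0 : 0 < size (take j u).
  rewrite size_takel //; case: s Hs Hsj {Hpre Hfw Hiff Hls Hcj Hmax} => //= ? ? _; lia.
case: (Ht _ Hj0) => i [[Hi1 Hi2] Hib].
have Hi0 : i = 0 by lia.
subst i.
rewrite size_takel // in Hi1.
rewrite drop0 take_takel // in Hi2.
have Htp : prefix t u by rewrite prefixE Hi2.
apply: (backward x0 Htp Hj); first by apply/Hiff.
exact: Ht.
Qed.
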